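(* Let $k$ be a field of characteristic $\neq 2$ and let $\mathfrak g_\boxtimes$ be the Tetrahedron algebra over $k$. Let $\Omega$ (respectively $\Omega'$, $\Omega''$) be the subalgebra of $\mathfrak g_\boxtimes$ generated by $X_{12}$ and $X_{03}$ (respectively by $X_{23}$ and $X_{01}$; by $X_{31}$ and $X_{02}$). Then $\mathfrak g_\boxtimes=\Omega+\Omega'+\Omega''$.
   Context: The Tetrahedron algebra $\mathfrak g_\boxtimes$ is the Lie algebra over $k$ with generators $X_{ij}$ ($i,j\in\{0,1,2,3\}$, $i\neq j$) and relations $X_{ij}+X_{ji}=0$ for $i\neq j$; $[X_{ij},X_{jk}]=2(X_{ij}+X_{jk})$ for mutually distinct $i,j,k$; $[X_{hi},[X_{hi},[X_{hi},X_{jk}]]]=4[X_{hi},X_{jk}]$ for mutually distinct $h,i,j,k$. *)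

(* Defs.v *)
From HB Require Import structures.
From mathcomp Require Import all_boot all_algebra.
Set Implicit Arguments. Unset Strict Implicit. Unset Printing Implicit Defensive.
Import GRing.Theory.
Local Open Scope ring_scope.

Definition is_lie_bracket (k : fieldType) (V : lmodType k) (br : V -> V -> V) : Prop :=
  [/\ (forall (a : k) (x y z : V), br (a *: x + y) z = a *: br x z + br y z),
      (forall (a : k) (x y z : V), br x (a *: y + z) = a *: br x y + br x z),
      (forall x : V, br x x = 0)
    & (forall x y z : V, br x (br y z) + br y (br z x) + br z (br x y) = 0)].

Definition is_lie_hom (k : fieldType) (V W : lmodType k)
    (brV : V -> V -> V) (brW : W -> W -> W) (f : V -> W) : Prop :=
  (forall (a : k) (x y : V), f (a *: x + y) = a *: f x + f y) /\
  (forall x y : V, f (brV x y) = brW (f x) (f y)).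

(* The defining relations of the Tetrahedron algebra, for a family
   X i j (i <> j) of elements indexed by {0,1,2,3} = 'I_4 (the diagonal
   values X i i play no role). *)
Definition tet_relations (k : fieldType) (V : lmodType k)
    (br : V -> V -> V) (X : 'I_4 -> 'I_4 -> V) : Prop :=
  [/\ (forall i j : 'I_4, i != j -> X i j + X j i = 0),
      (forall i j l : 'I_4, i != j -> j != l -> i != l ->
          br (X i j) (X j l) = 2%:R *: (X i j + X j l))
    & (forall h i j l : 'I_4, h != i -> h != j -> h != l -> i != j -> i != l -> j != l ->
          br (X h i) (br (X h i) (br (X h i) (X j l))) = 4%:R *: br (X h i) (X j l))].

(* (V, br, X) is the Tetrahedron algebra over k: the Lie algebra presented by
   the generators X i j and the relations above, i.e. the universal
   (initial) Lie algebra with such a family satisfying the relations. *)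
Definition is_tetrahedron_algebra (k : fieldType) (V : lmodType k)
    (br : V -> V -> V) (X : 'I_4 -> 'I_4 -> V) : Prop :=
  [/\ is_lie_bracket br, tet_relations br X &
      forall (W : lmodType k) (brW : W -> W -> W) (Y : 'I_4 -> 'I_4 -> W),
        is_lie_bracket brW -> tet_relations brW Y ->
        exists f : V -> W,
          [/\ is_lie_hom br brW f,
              (forall i j : 'I_4, i != j -> f (X i j) = Y i j) &
              (forall g : V -> W, is_lie_hom br brW g ->
                 (forall i j : 'I_4, i != j -> g (X i j) = Y i j) ->
                 forall v, g v = f v)]].

Definition in_lie_subalg (k : fieldType) (V : lmodType k)
    (br : V -> V -> V) (a b : V) (v : V) : Prop :=
  forall P : V -> Prop,
    P a -> P b -> P 0 ->
    (forall x y, P x -> P y -> P (x + y)) ->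
    (forall (c : k) x, P x -> P (c *: x)) ->
    (forall x y, P x -> P y -> P (br x y)) ->
    P v.

Definition o0 : 'I_4 := @Ordinal 4 0 isT.
Definition o1 : 'I_4 := @Ordinal 4 1 isT.
Definition o2 : 'I_4 := @Ordinal 4 2 isT.
Definition o3 : 'I_4 := @Ordinal 4 3 isT.

(* Main.v *)
Require Import Defs.
From HB Require Import structures.
From mathcomp Require Import all_boot all_algebra.
From mathcomp Require Import boolp.
Import GRing.Theory.
Local Open Scope ring_scope.


Lemma br0l {k : fieldType} {V : lmodType k} {br : V -> V -> V} :
  is_lie_bracket br -> forall z, br 0 z = 0.
Proof.
case=> L1 _ _ _ z; have := L1 1 0 0 z; rewrite !scale1r addr0 => h.
by apply/esym/(addrI (br 0 z)); rewrite addr0 -h.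
Qed.
Lemma br0r {k : fieldType} {V : lmodType k} {br : V -> V -> V} :
  is_lie_bracket br -> forall z, br z 0 = 0.
Proof.
case=> _ L2 _ _ z; have := L2 1 z 0 0; rewrite !scale1r addr0 => h.
by apply/esym/(addrI (br z 0)); rewrite addr0 -h.
Qed.
Lemma brDl {k : fieldType} {V : lmodType k} {br : V -> V -> V} :
  is_lie_bracket br -> forall x y z, br (x + y) z = br x z + br y z.
Proof. by case=> L1 _ _ _ x y z; have := L1 1 x y z; rewrite !scale1r. Qed.
Lemma brDr {k : fieldType} {V : lmodType k} {br : V -> V -> V} :
  is_lie_bracket br -> forall x y z, br x (y + z) = br x y + br x z.
Proof. by case=> _ L2 _ _ x y z; have := L2 1 x y z; rewrite !scale1r. Qed.
Lemma brZl {k : fieldType} {V : lmodType k} {br : V -> V -> V} :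
  is_lie_bracket br -> forall a x z, br (a *: x) z = a *: br x z.
Proof.
move=> hb a x z; have := hb; case=> L1 _ _ _; have := L1 a x 0 z.
by rewrite !addr0  (br0l hb) addr0.
Qed.
Lemma brZr {k : fieldType} {V : lmodType k} {br : V -> V -> V} :
  is_lie_bracket br -> forall a x z, br x (a *: z) = a *: br x z.
Proof.
move=> hb a x z; have := hb; case=> _ L2 _ _; have := L2 a x z 0.
by rewrite !addr0  (br0r hb) addr0.
Qed.
Lemma brNl {k : fieldType} {V : lmodType k} {br : V -> V -> V} :
  is_lie_bracket br -> forall x z, br (- x) z = - br x z.
Proof. by move=> hb x z; rewrite -scaleN1r  (brZl hb) scaleN1r. Qed.
Lemma brNr {k : fieldType} {V : lmodType k} {br : V -> V -> V} :
  is_lie_bracket br -> forall x z, br x (- z) = - br x z.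
Proof. by move=> hb x z; rewrite -scaleN1r  (brZr hb) scaleN1r. Qed.
Lemma brA {k : fieldType} {V : lmodType k} {br : V -> V -> V} :
  is_lie_bracket br -> forall x y, br x y = - br y x.
Proof.
move=> hb x y; have := hb; case=> _ _ A _; have h := A (x + y).
rewrite  (brDl hb) ! (brDr hb) (A x) (A y) add0r addr0 in h.
by apply/eqP; rewrite -addr_eq0 h.
Qed.
Lemma brDer {k : fieldType} {V : lmodType k} {br : V -> V -> V} :
  is_lie_bracket br -> forall g x y, br g (br x y) = br (br g x) y + br x (br g y).
Proof.
move=> hb g x y; have := hb; case=> _ _ _ J; have := J g x y.
rewrite (brA hb y g) (brNr hb) (brA hb y (br g x)).
move/eqP; rewrite -addrA addr_eq0 => /eqP ->.
by rewrite opprD !opprK addrC.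
Qed.

Lemma sub_p {k : fieldType} {V : lmodType k} {br : V -> V -> V} p q :
  in_lie_subalg br p q p.
Proof. by move=> P Pp. Qed.
Lemma sub_q {k : fieldType} {V : lmodType k} {br : V -> V -> V} p q :
  in_lie_subalg br p q q.
Proof. by move=> P Pp Pq. Qed.
Lemma sub_0 {k : fieldType} {V : lmodType k} {br : V -> V -> V} p q :
  in_lie_subalg br p q 0.
Proof. by move=> P Pp Pq P0. Qed.
Lemma sub_D {k : fieldType} {V : lmodType k} {br : V -> V -> V} p q x y :
  in_lie_subalg br p q x -> in_lie_subalg br p q y -> in_lie_subalg br p q (x + y).
Proof.
move=> hx hy P Pp Pq P0 PD PZ PB; apply: (PD); [exact: (hx P Pp Pq P0 PD PZ PB) | exact: (hy P Pp Pq P0 PD PZ PB)].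
Qed.
Lemma sub_Z {k : fieldType} {V : lmodType k} {br : V -> V -> V} p q (c : k) x :
  in_lie_subalg br p q x -> in_lie_subalg br p q (c *: x).
Proof. move=> hx P Pp Pq P0 PD PZ PB; apply: (PZ); exact: (hx P Pp Pq P0 PD PZ PB). Qed.
Lemma sub_B {k : fieldType} {V : lmodType k} {br : V -> V -> V} p q x y :
  in_lie_subalg br p q x -> in_lie_subalg br p q y -> in_lie_subalg br p q (br x y).
Proof.
move=> hx hy P Pp Pq P0 PD PZ PB; apply: (PB); [exact: (hx P Pp Pq P0 PD PZ PB) | exact: (hy P Pp Pq P0 PD PZ PB)].
Qed.

Definition adj {k : fieldType} {V : lmodType k} (br : V -> V -> V) (g p : V) :=
  exists a b : k, br g p = a *: g + b *: p.

Lemma stab {k : fieldType} {V : lmodType k} {br : V -> V -> V} :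
  is_lie_bracket br -> forall p q g,
  adj br g p -> adj br g q ->
  forall w, in_lie_subalg br p q w ->
  exists u (c : k), in_lie_subalg br p q u /\ br g w = u + c *: g.
Proof.
move=> hb p q g [ap [bp hp]] [aq [bq hq]].
pose M v := exists u (c : k), in_lie_subalg br p q u /\ v = u + c *: g.
have MD x y : M x -> M y -> M (x + y).
  move=> [u1 [c1 [h1 ->]]] [u2 [c2 [h2 ->]]]; exists (u1 + u2), (c1 + c2).
  by split; [exact: sub_D | rewrite scalerDl addrACA].
have MZ (c : k) x : M x -> M (c *: x).
  move=> [u1 [c1 [h1 ->]]]; exists (c *: u1), (c * c1).
  by split; [exact: sub_Z | rewrite scalerDr scalerA].
have MO x : in_lie_subalg br p q x -> M x.
  by move=> hx; exists x, 0; split; rewrite ?scale0r ?addr0.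
have MG : M g by exists 0, 1; split; [exact: sub_0 | rewrite add0r scale1r].
suff: forall w, in_lie_subalg br p q w -> in_lie_subalg br p q w /\ M (br g w).
  by move=> H w /H [_ [u [c [hu ->]]]]; exists u, c.
move=> w hw; apply: (hw (fun w => in_lie_subalg br p q w /\ M (br g w))).
- split; first exact: sub_p.
  by rewrite hp; apply: (MD); [apply: (MZ) | apply: (MZ); apply: (MO); exact: sub_p].
- split; first exact: sub_q.
  by rewrite hq; apply: (MD); [apply: (MZ) | apply: (MZ); apply: (MO); exact: sub_q].
- by split; [exact: sub_0 | rewrite (br0r hb); apply: (MO); exact: sub_0].
- move=> x y [hx Mx] [hy My]; split; first exact: sub_D.
  by rewrite (brDr hb); apply: (MD).
- move=> c x [hx Mx]; split; first exact: sub_Z.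
  by rewrite (brZr hb); apply: (MZ).
- move=> x y [hx Mx] [hy My]; split; first exact: sub_B.
  rewrite (brDer hb); apply: (MD).
  + case: Mx => [u [c [hu ->]]]; rewrite (brDl hb) (brZl hb).
    by apply: (MD); [apply: (MO); exact: sub_B | exact: (MZ)].
  + case: My => [u [c [hu ->]]]; rewrite (brDr hb) (brZr hb) (brA hb x g).
    apply: (MD); first by apply: (MO); exact: sub_B.
    apply: (MZ); rewrite -scaleN1r; apply: (MZ).
    by case: Mx => [u' [c' [hu' ->]]]; apply: (MD); [exact: (MO) | exact: (MZ)].
Qed.

Definition ownb (a b c d i j : 'I_4) : bool :=
  [|| (i == a) && (j == b), (i == b) && (j == a), (i == c) && (j == d) | (i == d) && (j == c)].
Definition adjb (i j c d : 'I_4) : bool :=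
  [&& i != j, c != d, [|| i == c, i == d, j == c | j == d] &
    ~~ (((i == c) && (j == d)) || ((i == d) && (j == c)))].

Lemma Xanti {k : fieldType} {V : lmodType k} {br : V -> V -> V} {X : 'I_4 -> 'I_4 -> V} :
  tet_relations br X -> forall i j, i != j -> X j i = - X i j.
Proof.
case=> R1 _ _ i j ij; apply/eqP; rewrite -addr_eq0 addrC; apply/eqP; exact: R1.
Qed.

Lemma adjP {k : fieldType} {V : lmodType k} {br : V -> V -> V} {X : 'I_4 -> 'I_4 -> V} :
  is_lie_bracket br -> tet_relations br X ->
  forall i j c d, adjb i j c d -> adj br (X i j) (X c d).
Proof.
move=> hb hr; have := hr; case=> _ R2 _ i j c d /and4P [ij cd sh ns].
have [/eqP jc|njc] := boolP (j == c).
  subst c; move: ns; rewrite eqxx andbT => /norP [_ id].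
  by exists 2%:R, 2%:R; rewrite R2 // scalerDr.
have [/eqP ic|nic] := boolP (i == c).
  subst c; move: ns; rewrite eqxx /= => /norP [jd _].
  have ji : j != i by rewrite eq_sym.
  exists 2%:R, (- 2%:R); rewrite -(opprK (X i j)) -(Xanti hr _ _ ij) (brNl hb) R2 //.
  by rewrite scalerDr opprD scaleNr scalerN.
have [/eqP jd|njd] := boolP (j == d).
  subst d; move: ns; rewrite eqxx andbT => /norP [ic _].
  have cj : c != j by rewrite eq_sym.
  exists (- 2%:R), 2%:R; rewrite -(opprK (X c j)) -(Xanti hr _ _ cj) (brNr hb) R2 //.
  by rewrite scalerDr opprD scaleNr scalerN.
have [/eqP id|nid] := boolP (i == d).
  subst d; move: ns; rewrite eqxx /= => /norP [_ jc].
  have ci : c != i by rewrite eq_sym.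
  have cj : c != j by rewrite eq_sym.
  exists (- 2%:R), (- 2%:R); rewrite (brA hb) R2 //.
  by rewrite scalerDr opprD !scaleNr addrC.
by move: sh; rewrite (negbTE njc) (negbTE nic) (negbTE njd) (negbTE nid).
Qed.

Lemma ownP {k : fieldType} {V : lmodType k} {br : V -> V -> V} {X : 'I_4 -> 'I_4 -> V} :
  tet_relations br X -> forall a b c d i j, a != b -> c != d ->
  ownb a b c d i j -> in_lie_subalg br (X a b) (X c d) (X i j).
Proof.
move=> hr a b c d i j ab cd.
case/or4P => /andP [/eqP -> /eqP ->]; try exact: sub_p; try exact: sub_q.
- by rewrite (Xanti hr _ _ ab) -scaleN1r; apply: sub_Z; exact: sub_p.
- by rewrite (Xanti hr _ _ cd) -scaleN1r; apply: sub_Z; exact: sub_q.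
Qed.

Lemma goodP {k : fieldType} {V : lmodType k} {br : V -> V -> V} {X : 'I_4 -> 'I_4 -> V} :
  is_lie_bracket br -> tet_relations br X -> forall a b c d i j, a != b -> c != d ->
  ownb a b c d i j || (adjb i j a b && adjb i j c d) ->
  forall u, in_lie_subalg br (X a b) (X c d) u ->
  exists u1 (e : k), in_lie_subalg br (X a b) (X c d) u1 /\ br (X i j) u = u1 + e *: X i j.
Proof.
move=> hb hr a b c d i j ab cd /orP [own | /andP [h1 h2]] u hu.
  exists (br (X i j) u), 0; rewrite scale0r addr0; split => //.
  by apply: sub_B => //; exact: ownP.
by apply: (stab hb) => //; exact: adjP.
Qed.

Lemma classif1 (i j : 'I_4) : i != j ->
  ownb o1 o2 o0 o3 i j || (adjb i j o1 o2 && adjb i j o0 o3).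
Proof. by case: i => [[|[|[|[|i]]]] Hi] //; case: j => [[|[|[|[|j]]]] Hj]. Qed.
Lemma classif2 (i j : 'I_4) : i != j ->
  ownb o2 o3 o0 o1 i j || (adjb i j o2 o3 && adjb i j o0 o1).
Proof. by case: i => [[|[|[|[|i]]]] Hi] //; case: j => [[|[|[|[|j]]]] Hj]. Qed.
Lemma classif3 (i j : 'I_4) : i != j ->
  ownb o3 o1 o0 o2 i j || (adjb i j o3 o1 && adjb i j o0 o2).
Proof. by case: i => [[|[|[|[|i]]]] Hi] //; case: j => [[|[|[|[|j]]]] Hj]. Qed.
Lemma classif_own (i j : 'I_4) : i != j ->
  [|| ownb o1 o2 o0 o3 i j, ownb o2 o3 o0 o1 i j | ownb o3 o1 o0 o2 i j].
Proof. by case: i => [[|[|[|[|i]]]] Hi] //; case: j => [[|[|[|[|j]]]] Hj]. Qed.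

Definition genL {k : fieldType} {V : lmodType k} (br : V -> V -> V)
    (X : 'I_4 -> 'I_4 -> V) (v : V) : Prop :=
  forall P : V -> Prop,
    (forall i j, i != j -> P (X i j)) -> P 0 ->
    (forall x y, P x -> P y -> P (x + y)) ->
    (forall (c : k) x, P x -> P (c *: x)) ->
    (forall x y, P x -> P y -> P (br x y)) -> P v.

Lemma genL0 {k : fieldType} {V : lmodType k} (br : V -> V -> V) X : genL br X 0.
Proof. by move=> P PX P0. Qed.
Lemma genLX {k : fieldType} {V : lmodType k} {br : V -> V -> V} {X : 'I_4 -> 'I_4 -> V} i j :
  i != j -> genL br X (X i j).
Proof. by move=> ij P PX *; apply: PX. Qed.
Lemma genLD {k : fieldType} {V : lmodType k} {br : V -> V -> V} {X : 'I_4 -> 'I_4 -> V} x y :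
  genL br X x -> genL br X y -> genL br X (x + y).
Proof.
move=> hx hy P PX P0 PD PZ PB; apply: (PD);
  [exact: (hx P PX P0 PD PZ PB) | exact: (hy P PX P0 PD PZ PB)].
Qed.
Lemma genLZ {k : fieldType} {V : lmodType k} {br : V -> V -> V} {X : 'I_4 -> 'I_4 -> V} (c : k) x :
  genL br X x -> genL br X (c *: x).
Proof. move=> hx P PX P0 PD PZ PB; apply: (PZ); exact: (hx P PX P0 PD PZ PB). Qed.
Lemma genLN {k : fieldType} {V : lmodType k} {br : V -> V -> V} {X : 'I_4 -> 'I_4 -> V} x :
  genL br X x -> genL br X (- x).
Proof. by move=> hx; rewrite -scaleN1r; apply: genLZ. Qed.
Lemma genLB {k : fieldType} {V : lmodType k} {br : V -> V -> V} {X : 'I_4 -> 'I_4 -> V} x y :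
  genL br X x -> genL br X y -> genL br X (br x y).
Proof.
move=> hx hy P PX P0 PD PZ PB; apply: (PB);
  [exact: (hx P PX P0 PD PZ PB) | exact: (hy P PX P0 PD PZ PB)].
Qed.

Definition Wt {k : fieldType} {V : lmodType k} (br : V -> V -> V)
  (X : 'I_4 -> 'I_4 -> V) := {v : V | `[< genL br X v >]}.
HB.instance Definition _ {k : fieldType} {V : lmodType k} (br : V -> V -> V)
  (X : 'I_4 -> 'I_4 -> V) := Choice.copy (Wt br X) {v : V | `[< genL br X v >]}.
HB.instance Definition _ {k : fieldType} {V : lmodType k} (br : V -> V -> V)
  (X : 'I_4 -> 'I_4 -> V) := SubType.copy (Wt br X) {v : V | `[< genL br X v >]}.


Lemma WP {k : fieldType} {V : lmodType k} {br : V -> V -> V} {X : 'I_4 -> 'I_4 -> V}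
  (u : Wt br X) : genL br X (val u).
Proof. exact/asboolP/(valP u). Qed.

Definition Wzero {k : fieldType} {V : lmodType k} (br : V -> V -> V) X : Wt br X :=
  exist _ 0 (asboolT (genL0 br X)).
Definition Wadd {k : fieldType} {V : lmodType k} (br : V -> V -> V) X (u v : Wt br X) : Wt br X :=
  exist _ (val u + val v) (asboolT (genLD _ _ (WP u) (WP v))).
Definition Wopp {k : fieldType} {V : lmodType k} (br : V -> V -> V) X (u : Wt br X) : Wt br X :=
  exist _ (- val u) (asboolT (genLN _ (WP u))).
Definition Wscale {k : fieldType} {V : lmodType k} (br : V -> V -> V) X (c : k) (u : Wt br X) : Wt br X :=
  exist _ (c *: val u) (asboolT (genLZ c _ (WP u))).
Arguments Wscale {k V br X}.
Definition Wbr {k : fieldType} {V : lmodType k} (br : V -> V -> V) X (u v : Wt br X) : Wt br X :=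
  exist _ (br (val u) (val v)) (asboolT (genLB _ _ (WP u) (WP v))).

Lemma WaddA {k : fieldType} {V : lmodType k} (br : V -> V -> V) X : associative (Wadd br X).
Proof. by move=> u v w; apply: val_inj => /=; rewrite addrA. Qed.
Lemma WaddC {k : fieldType} {V : lmodType k} (br : V -> V -> V) X : commutative (Wadd br X).
Proof. by move=> u v; apply: val_inj => /=; rewrite addrC. Qed.
Lemma Wadd0 {k : fieldType} {V : lmodType k} (br : V -> V -> V) X : left_id (Wzero br X) (Wadd br X).
Proof. by move=> u; apply: val_inj => /=; rewrite add0r. Qed.
Lemma WaddN {k : fieldType} {V : lmodType k} (br : V -> V -> V) X :
  left_inverse (Wzero br X) (Wopp br X) (Wadd br X).
Proof. by move=> u; apply: val_inj => /=; rewrite addNr. Qed.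

HB.instance Definition _ {k : fieldType} {V : lmodType k} (br : V -> V -> V) X :=
  GRing.isZmodule.Build (Wt br X) (WaddA br X) (WaddC br X) (Wadd0 br X) (WaddN br X).

Lemma WscA {k : fieldType} {V : lmodType k} (br : V -> V -> V) X a b (v : Wt br X) :
  Wscale a (Wscale b v) = Wscale (a * b) v.
Proof. by apply: val_inj => /=; rewrite scalerA. Qed.
Lemma Wsc1 {k : fieldType} {V : lmodType k} (br : V -> V -> V) X : left_id 1 (@Wscale k V br X).
Proof. by move=> u; apply: val_inj => /=; rewrite scale1r. Qed.
Lemma WscDr {k : fieldType} {V : lmodType k} (br : V -> V -> V) X :
  right_distributive (@Wscale k V br X) +%R.
Proof. by move=> a u v; apply: val_inj => /=; rewrite scalerDr. Qed.
Lemma WscDl {k : fieldType} {V : lmodType k} (br : V -> V -> V) X (v : Wt br X) :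
  {morph (@Wscale k V br X)^~ v: a b / a + b}.
Proof. by move=> a b; apply: val_inj => /=; rewrite scalerDl. Qed.

HB.instance Definition _ {k : fieldType} {V : lmodType k} (br : V -> V -> V) X :=
  GRing.Zmodule_isLmodule.Build k (Wt br X) (@WscA k V br X) (Wsc1 br X) (WscDr br X) (@WscDl k V br X).


Theorem proposition1p5 (k : fieldType) (V : lmodType k)
    (br : V -> V -> V) (X : 'I_4 -> 'I_4 -> V) :
  (2%:R : k) != 0 ->
  is_tetrahedron_algebra br X ->
  forall v : V, exists u u' u'' : V,
    [/\ in_lie_subalg br (X o1 o2) (X o0 o3) u,
        in_lie_subalg br (X o2 o3) (X o0 o1) u',
        in_lie_subalg br (X o3 o1) (X o0 o2) u''
      & v = u + u' + u''].
Proof.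
move=> _ [hb hr U] v.
have Lv : genL br X v.
  pose Y i j : Wt br X := insubd (Wzero br X) (X i j).
  have valY i j : i != j -> val (Y i j) = X i j.
    by move=> ij; rewrite /Y insubdK // unfold_in; apply/asboolP; exact: genLX.
  have hbW : is_lie_bracket (Wbr br X).
    have := hb; case=> L1 L2 A J; split.
    - by move=> a x y z; apply: val_inj => /=; exact: L1.
    - by move=> a x y z; apply: val_inj => /=; exact: L2.
    - by move=> x; apply: val_inj => /=; exact: A.
    - by move=> x y z; apply: val_inj => /=; exact: J.
  have hrW : tet_relations (Wbr br X) Y.
    have := hr; case=> R1 R2 R3; split.
    - move=> i j ij; apply: val_inj => /=; rewrite !valY // ?(eq_sym j i) //; exact: R1.
    - move=> i j l ij jl il; apply: val_inj => /=; rewrite !valY //; exact: R2.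
    - move=> h i j l hi hj hl ij il jl; apply: val_inj => /=; rewrite !valY //; exact: R3.
  have [f [[fl fb] fX _]] := U _ (Wbr br X) Y hbW hrW.
  have [f0 [_ _ uq]] := U V br X hb hr.
  have e1 : v = f0 v.
    by apply: (uq id) => //; split.
  have e2 : val (f v) = f0 v.
    apply: (uq (fun x => val (f x))).
      split; first by move=> a x y; rewrite fl.
      by move=> x y; rewrite fb.
    by move=> i j ij; rewrite fX // valY.
  by rewrite e1 -e2; exact: WP.
pose O1 := in_lie_subalg br (X o1 o2) (X o0 o3).
pose O2 := in_lie_subalg br (X o2 o3) (X o0 o1).
pose O3 := in_lie_subalg br (X o3 o1) (X o0 o2).
pose S w := exists u u' u'', [/\ O1 u, O2 u', O3 u'' & w = u + u' + u''].
have S0 : S 0.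
  by exists 0, 0, 0; split; rewrite ?addr0 //; exact: sub_0.
have SD x y : S x -> S y -> S (x + y).
  move=> [u1 [u1' [u1'' [h1 h1' h1'' ->]]]] [u2 [u2' [u2'' [h2 h2' h2'' ->]]]].
  exists (u1 + u2), (u1' + u2'), (u1'' + u2''); split; try exact: sub_D.
  by rewrite addrACA (addrACA u1).
have SZ (c : k) x : S x -> S (c *: x).
  move=> [u1 [u1' [u1'' [h1 h1' h1'' ->]]]].
  exists (c *: u1), (c *: u1'), (c *: u1''); split; try exact: sub_Z.
  by rewrite !scalerDr.
have S1 x : O1 x -> S x.
  by move=> h; exists x, 0, 0; split; rewrite ?addr0 //; exact: sub_0.
have S2 x : O2 x -> S x.
  by move=> h; exists 0, x, 0; split; rewrite ?addr0 ?add0r //; exact: sub_0.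
have S3 x : O3 x -> S x.
  by move=> h; exists 0, 0, x; split; rewrite ?add0r //; exact: sub_0.
have o12 : o1 != o2 by []. have o03 : o0 != o3 by [].
have o23 : o2 != o3 by []. have o01 : o0 != o1 by [].
have o31 : o3 != o1 by []. have o02 : o0 != o2 by [].
have SX i j : i != j -> S (X i j).
  move=> ij; case/or3P: (classif_own _ _ ij) => h.
  - by apply: (S1); exact: ownP.
  - by apply: (S2); exact: ownP.
  - by apply: (S3); exact: ownP.
pose N w := forall s, S s -> S (br w s).
have NX i j : i != j -> N (X i j).
  move=> ij s [u [u' [u'' [h h' h'' ->]]]]; rewrite !(brDr hb).
  have gS : forall e : k, S (e *: X i j) by move=> e; apply: (SZ); exact: (SX).
  apply: (SD); first apply: (SD).
  - have [u1 [e [hu1 ->]]] := goodP hb hr _ _ _ _ _ _ o12 o03 (classif1 _ _ ij) _ h.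
    by apply: (SD); [exact: (S1) | exact: (gS)].
  - have [u1 [e [hu1 ->]]] := goodP hb hr _ _ _ _ _ _ o23 o01 (classif2 _ _ ij) _ h'.
    by apply: (SD); [exact: (S2) | exact: (gS)].
  - have [u1 [e [hu1 ->]]] := goodP hb hr _ _ _ _ _ _ o31 o02 (classif3 _ _ ij) _ h''.
    by apply: (SD); [exact: (S3) | exact: (gS)].
have key : S v /\ N v.
  apply: (Lv (fun w => S w /\ N w)).
  - by move=> i j ij; split; [exact: (SX) | exact: (NX)].
  - by split => // s _; rewrite (br0l hb).
  - move=> x y [Sx Nx] [Sy Ny]; split; first exact: (SD).
    by move=> s hs; rewrite (brDl hb); apply: (SD); [exact: (Nx) | exact: (Ny)].
  - move=> c x [Sx Nx]; split; first exact: (SZ).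
    by move=> s hs; rewrite (brZl hb); apply: (SZ); exact: (Nx).
  - move=> x y [Sx Nx] [Sy Ny]; split; first exact: (Nx).
    move=> s hs.
    have -> : br (br x y) s = br x (br y s) + (-1) *: br y (br x s).
      by rewrite (brDer hb x y s) scaleN1r addrK.
    by apply: (SD); [apply: (Nx); exact: (Ny) | apply: (SZ); apply: (Ny); exact: (Nx)].
by case: key.
Qed.
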